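(* Let $T$ be a $\mathbb{Z}_2^2$-cordial tree with $4k$ vertices for some $k\in\mathbb{N}$, and let $T^*$ be a tree containing $T$ as an induced subgraph with $|V(T^* )|\le 4k+3$. Then $T^*$ is $\mathbb{Z}_2^2$-cordial.
   Context: $\mathbb{N}=\mathbb{Z}_{\ge0}$. $\mathbb{Z}_2^2=\mathbb{Z}_2\times\mathbb{Z}_2$ is the Klein four-group. For an abelian group $A$ and a graph $G=(V,E)$, a vertex labeling $\ell:V\to A$ induces an edge labeling $\ell(\{v_1,v_2\})=\ell(v_1)+\ell(v_2)$. Let $f_V(a)=|\{v\in V:\ell(v)=a\}|$ and $f_E(a)=|\{e\in E:\ell(e)=a\}|$. The labeling is $A$-cordial if $|f_V(a_1)-f_V(a_2)|\le 1$ and $|f_E(a_1)-f_E(a_2)|\le 1$ for all $a_1,a_2\in A$; $G$ is $A$-cordial if it admits an $A$-cordial labeling. *)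

(* Defs.v *)
From HB Require Import structures.
From mathcomp Require Import all_boot all_order all_algebra.
Set Implicit Arguments. Unset Strict Implicit. Unset Printing Implicit Defensive.
Import GRing.Theory.
Local Open Scope ring_scope.

Definition simple_graph (V : finType) (e : rel V) : Prop :=
  irreflexive e /\ symmetric e.

Definition connected_graph (V : finType) (e : rel V) : Prop :=
  forall x y : V, connect e x y.

Definition has_cycle (V : finType) (e : rel V) : Prop :=
  exists s : seq V, [/\ 3 <= size s, uniq s & cycle e s]%N.

Definition is_tree (V : finType) (e : rel V) : Prop :=
  [/\ simple_graph e, connected_graph e & ~ has_cycle e].

Definition induced_subgraph (V W : finType) (e : rel V) (e' : rel W) : Prop :=
  exists f : V -> W, injective f /\ forall x y, e' (f x) (f y) = e x y.

Definition fV (A : zmodType) (V : finType) (l : V -> A) (a : A) : nat :=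
  #|[set v : V | l v == a]|.

(* number of (unordered) edges {x,y} with induced label l x + l y = a;
   each unordered edge is counted once via the ordering of enum_rank *)
Definition fE (A : zmodType) (V : finType) (e : rel V) (l : V -> A) (a : A)
  : nat :=
  #|[set p : V * V | [&& e p.1 p.2, (enum_rank p.1 < enum_rank p.2)%N
                      & l p.1 + l p.2 == a]]|.

Definition cordial_labeling (A : zmodType) (V : finType) (e : rel V)
  (l : V -> A) : Prop :=
  forall a1 a2 : A, (fV l a1 <= (fV l a2).+1)%N /\ (fE e l a1 <= (fE e l a2).+1)%N.

Definition cordial (A : zmodType) (V : finType) (e : rel V) : Prop :=
  exists l : V -> A, cordial_labeling e l.

Definition Klein : zmodType := ('Z_2 * 'Z_2)%type.

(* Main.v *)
Require Import Defs.
From mathcomp Require Import all_boot all_order all_algebra.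
From mathcomp Require Import zify.
Set Implicit Arguments. Unset Strict Implicit. Unset Printing Implicit Defensive.
Import GRing.Theory.

Definition K2 := (bool * bool)%type.
Definition kadd (a b : K2) : K2 := (addb a.1 b.1, addb a.2 b.2).
Definition kl2 : seq K2 := [:: (false,false); (false,true); (true,false); (true,true)].

Definition adjf (b01 b02 b12 : bool) (i j : nat) : bool :=
  match i, j with
  | 0, 1 | 1, 0 => b01
  | 0, 2 | 2, 0 => b02
  | 1, 2 | 2, 1 => b12
  | _, _ => false
  end.
Definition attf (o0 o1 o2 : option K2) (i : nat) := nth None [:: o0; o1; o2] i.
Definition gf (g0 g1 g2 : K2) (i : nat) := nth (false,false) [:: g0; g1; g2] i.

Definition attlab (o : option K2) (x a : K2) : bool :=
  if o is Some b then kadd b x == a else false.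

Definition Mf r (adj : nat -> nat -> bool) (att : nat -> option K2) (g : nat -> K2) (a : K2) : nat :=
  sumn [seq 2 * attlab (att i) (g i) a +
             sumn [seq nat_of_bool (adj i j && (kadd (g i) (g j) == a)) | j <- iota 0 r]
       | i <- iota 0 r].
Definition cvf r (g : nat -> K2) (a : K2) : nat :=
  sumn [seq nat_of_bool (g i == a) | i <- iota 0 r].
Definition dlf (dopt : option K2) (a : K2) : nat :=
  if dopt is Some d then nat_of_bool (a != d) else 0.
Definition balf (v : seq nat) : bool :=
  all (fun x => all (fun y => x <= y + 2) v) v.
Definition good r adj att dopt g : bool :=
  all (fun a => cvf r g a <= 1) kl2 &&
  balf [seq 2 * dlf dopt a + Mf r adj att g a | a <- kl2].
Definition consf r (adj : nat -> nat -> bool) (att : nat -> option K2) (dopt : option K2) : bool :=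
  if dopt is Some _ then
    all (fun i => all (fun j => adj i j ==> ~~ (isSome (att i) && isSome (att j))) (iota 0 r)) (iota 0 r) &&
    all (fun i => isSome (att i) || has (fun j => adj i j && (isSome (att j) ||
        has (fun k => adj j k && isSome (att k)) (iota 0 r))) (iota 0 r)) (iota 0 r)
  else all (fun i => att i == None) (iota 0 r).

Definition okl : seq (option K2) := None :: map Some kl2.
Definition bl := [:: true; false].
Definition bl2 (c : bool) := if c then bl else [:: false].
Definition okl2 (c : bool) := if c then okl else [:: None].
Definition ff : K2 := (false,false).
Definition bigcheck (r : nat) : bool :=
  all (fun b01 => all (fun b02 => all (fun b12 =>
  all (fun o0 => all (fun o1 => all (fun o2 => all (fun dopt =>
    consf r (adjf b01 b02 b12) (attf o0 o1 o2) dopt ==>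
    has (fun g0 => has (fun g1 => has (fun g2 =>
      good r (adjf b01 b02 b12) (attf o0 o1 o2) dopt (gf g0 g1 g2))
       (if 2 < r then [seq x <- kl2 | (x != g0) && (x != g1)] else [:: ff]))
       (if 1 < r then [seq x <- kl2 | x != g0] else [:: ff]))
       (if 0 < r then kl2 else [:: ff]))
  okl) (okl2 (2 < r))) (okl2 (1 < r))) (okl2 (0 < r))) (bl2 (2 < r))) (bl2 (2 < r))) (bl2 (1 < r)).

Lemma bigcheck0 : bigcheck 0 = true. Proof. vm_compute. reflexivity. Qed.
Lemma bigcheck1 : bigcheck 1 = true. Proof. vm_compute. reflexivity. Qed.
Lemma bigcheck2 : bigcheck 2 = true. Proof. vm_compute. reflexivity. Qed.
Lemma bigcheck3 : bigcheck 3 = true. Proof. vm_compute. reflexivity. Qed.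

Lemma mem_kl2 (a : K2) : a \in kl2.
Proof. by case: a => [[] []]. Qed.
Lemma mem_okl (o : option K2) : o \in okl.
Proof. by case: o => [[[] []]|]. Qed.
Lemma mem_bl2 (c b : bool) : (c || ~~ b) -> b \in bl2 c.
Proof. by case: c; case: b. Qed.
Lemma mem_okl2 (c : bool) o : (c || (o == None)) -> o \in okl2 c.
Proof. case: c => //=; first by rewrite mem_okl. by move=> /eqP ->. Qed.

Lemma fin_sound r b01 b02 b12 o0 o1 o2 dopt :
  (r <= 3)%N -> ((1 < r) || ~~ b01)%N -> ((2 < r) || ~~ b02)%N -> ((2 < r) || ~~ b12)%N ->
  ((0 < r) || (o0 == None))%N -> ((1 < r) || (o1 == None))%N -> ((2 < r) || (o2 == None))%N ->
  consf r (adjf b01 b02 b12) (attf o0 o1 o2) dopt ->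
  exists g0 g1 g2, good r (adjf b01 b02 b12) (attf o0 o1 o2) dopt (gf g0 g1 g2).
Proof.
move=> hr h01 h02 h12 ho0 ho1 ho2 hc.
have : bigcheck r.
  by move: hr; rewrite leq_eqVlt ltnS leq_eqVlt ltnS leq_eqVlt ltnS leqn0;
     case/or4P => /eqP ->; [exact: bigcheck3|exact: bigcheck2|exact: bigcheck1|exact: bigcheck0].
move=> /allP /(_ _ (mem_bl2 h01)) /allP /(_ _ (mem_bl2 h02)) /allP /(_ _ (mem_bl2 h12)).
move=> /allP /(_ _ (mem_okl2 ho0)) /allP /(_ _ (mem_okl2 ho1)) /allP /(_ _ (mem_okl2 ho2)).
move=> /allP /(_ _ (mem_okl dopt)) /implyP /(_ hc).
by case/hasP => g0 _ /hasP [g1 _] /hasP [g2 _ H]; exists g0, g1, g2.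
Qed.

Definition z0 : 'Z_2 := 0%R.
Definition z1 : 'Z_2 := 1%R.
Lemma mem_z (x : 'Z_2) : (x == z0) || (x == z1).
Proof. by case: x => [[|[|]]] //. Qed.
Definition zb (b : bool) : 'Z_2 := if b then z1 else z0.
Definition phi (a : K2) : Klein := (zb a.1, zb a.2).
Definition psi (a : Klein) : K2 := (a.1 != z0, a.2 != z0).
Lemma phiK a : psi (phi a) = a.
Proof. by case: a => [[] []]. Qed.
Lemma psiK a : phi (psi a) = a.
Proof. case: a => x y; rewrite /phi /psi /=.
by case/orP: (mem_z x) => /eqP->; case/orP: (mem_z y) => /eqP->. Qed.
Lemma psi_inj : injective psi. Proof. exact: can_inj psiK. Qed.
Lemma psiD a b : psi (a + b)%R = kadd (psi a) (psi b).
Proof. case: a b => x y [x' y']; rewrite /psi /kadd /=.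
by case/orP: (mem_z x) => /eqP->; case/orP: (mem_z y) => /eqP->;
   case/orP: (mem_z x') => /eqP->; case/orP: (mem_z y') => /eqP->; vm_compute. Qed.
Lemma eq_psi a b : (a == b) = (psi a == psi b).
Proof. by apply/eqP/eqP => [->|/psi_inj]. Qed.

Lemma sumK (F : Klein -> nat) : (\sum_(a : Klein) F a =
  F (phi (false,false)) + F (phi (false,true)) + F (phi (true,false)) + F (phi (true,true)))%N.
Proof.
have hp : perm_eq (index_enum Klein) (map phi kl2).
  apply: uniq_perm; first exact: index_enum_uniq.
    by rewrite map_inj_uniq //; apply: (can_inj phiK).
  move=> a; rewrite mem_index_enum; symmetry; apply/mapP; exists (psi a);
    [exact: mem_kl2 | by rewrite psiK].
by rewrite (perm_big _ hp) /= !big_cons big_nil addn0 !addnA.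
Qed.

Lemma no_back_edge (V : finType) (e : rel V) :
  ~ has_cycle e -> forall u rest w, uniq (u :: rest) -> path e u rest ->
  w \in rest -> e w u -> w = head u rest.
Proof.
move=> acyc u rest w Hu Hp Hw Hwu; move: Hu Hp; case/splitPr: Hw => r1 r2.
case: r1 => [//|a r1] Hu Hp; exfalso; apply: acyc.
exists (u :: rcons (a :: r1) w); split.
- by rewrite /= size_rcons.
- by move: Hu; rewrite -cat_rcons -cat_cons cat_uniq => /and3P [].
- rewrite /= rcons_path last_rcons Hwu andbT.
  by move: Hp; rewrite -cat_rcons cat_path => /andP [].
Qed.

Definition eS (V : finType) (e : rel V) (S : {set V}) := [rel x y | [&& e x y, x \in S & y \in S]].
Definition OS (V : finType) (e : rel V) (S : {set V}) := (\sum_(x in S) \sum_(y in S) e x y)%N.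
Definition connS (V : finType) (e : rel V) (S : {set V}) :=
  forall x y, x \in S -> y \in S -> connect (eS e S) x y.

Lemma size_le_card (V : finType) (S : {set V}) (s : seq V) :
  uniq s -> all (mem S) s -> (size s <= #|S|)%N.
Proof.
move=> Hu /allP Ha; rewrite cardE; apply: uniq_leq_size => // x /Ha.
by rewrite mem_enum.
Qed.

Lemma path_eS_all (V : finType) (e : rel V) S u p :
  path (eS e S) u p -> all (mem S) p.
Proof.
elim: p u => [//|a p IH] u /= /andP [/and3P [_ _ Ha] Hp].
by rewrite Ha (IH a).
Qed.

Lemma leaf_none (V : finType) (e : rel V) (S : {set V}) :
  symmetric e -> irreflexive e -> ~ has_cycle e -> (1 < #|S|)%N -> connS e S ->
  forall u p, uniq (u :: p) -> path (eS e S) u p -> u \in S ->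
  (forall w, w \in S -> e u w -> w \in u :: p) ->
  exists u w, [/\ u \in S, w \in S, e u w & forall w', w' \in S -> e u w' -> w' = w].
Proof.
move=> esym eirr acyc hS hc u p Hu Hp HuS Hnone.
case: p Hu Hp Hnone => [|a p] Hu Hp Hnone.
  exfalso.
  have [y Hy] : exists y, y \in S :\ u.
    by apply/set0Pn; rewrite -card_gt0 -ltnS; rewrite (cardsD1 u) HuS in hS.
  move: Hy; rewrite in_setD1 => /andP [Hyu HyS].
  case/connectP: (hc u y HuS HyS) => q Hq Hl.
  case: q Hq Hl => [_ Hl|z q /= /andP [/and3P [Huz _ HzS] _] _].
    by move: Hyu; rewrite Hl /= eqxx.
  move: (Hnone z HzS Huz); rewrite inE => /eqP Hzu.
  by rewrite Hzu eirr in Huz.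
have Hpe : path e u (a :: p) by apply: sub_path Hp => x y /and3P [].
exists u, a; move: Hp => /= /andP [/and3P [Hua _ HaS] Hp]; split => //.
move=> w' Hw' Huw'; move: (Hnone w' Hw' Huw'); rewrite in_cons => /orP [/eqP Hw'u|Hw'p].
  by rewrite Hw'u eirr in Huw'.
by apply: (no_back_edge acyc Hu Hpe Hw'p); rewrite esym.
Qed.

Lemma leaf_ex (V : finType) (e : rel V) (S : {set V}) :
  symmetric e -> irreflexive e -> ~ has_cycle e -> (1 < #|S|)%N -> connS e S ->
  exists u w, [/\ u \in S, w \in S, e u w & forall w', w' \in S -> e u w' -> w' = w].
Proof.
move=> esym eirr acyc hS hc.
have [x0 Hx0] : exists x, x \in S.
  by apply/set0Pn; rewrite -card_gt0; apply: ltnW.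
suff H : forall n p u, uniq (u :: p) -> path (eS e S) u p -> u \in S ->
  (#|S| - size p <= n)%N ->
  exists u w, [/\ u \in S, w \in S, e u w & forall w', w' \in S -> e u w' -> w' = w].
  by apply: (H #|S| [::] x0) => //; rewrite subn0.
elim=> [|n IH] p u Hu Hp HuS Hn;
  case: (pickP [pred w | [&& w \in S, e u w & w \notin u :: p]]) => [w /and3P [HwS Huw Hwn]|Hnone].
- have : (size (w :: u :: p) <= #|S|)%N.
    apply: size_le_card; first by rewrite cons_uniq Hwn Hu.
    by rewrite /= HwS HuS (path_eS_all Hp).
  by move: Hn; rewrite /=; lia.
- apply: (leaf_none esym eirr acyc hS hc Hu Hp HuS) => w HwS Huw.
  by move: (Hnone w); rewrite /= HwS Huw /= => /negbFE.
- apply: (IH (u :: p) w).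
  + by rewrite cons_uniq Hwn Hu.
  + by rewrite /= esym Huw HwS HuS.
  + done.
  + by move: Hn => /=; lia.
- apply: (leaf_none esym eirr acyc hS hc Hu Hp HuS) => w HwS Huw.
  by move: (Hnone w); rewrite /= HwS Huw /= => /negbFE.
Qed.

Lemma path_lift (V : finType) (e : rel V) (S : {set V}) u y p :
  path (eS e S) y p -> u \notin y :: p -> path (eS e (S :\ u)) y p.
Proof.
elim: p y => [//|a p IH] y /= /andP [/and3P [Hya HyS HaS] Hp].
rewrite !inE negb_or => /andP [Huy].
rewrite negb_or => /andP [Hua Hup].
rewrite /= Hya HyS HaS (eq_sym y) Huy (eq_sym a) Hua /=.
by apply: IH => //; rewrite in_cons negb_or Hua.
Qed.

Lemma connS_del (V : finType) (e : rel V) (S : {set V}) u w :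
  symmetric e -> connS e S -> u \in S ->
  (forall w', w' \in S -> e u w' -> w' = w) -> connS e (S :\ u).
Proof.
move=> esym hc HuS Hleaf y z.
rewrite !in_setD1 => /andP [Hyu HyS] /andP [Hzu HzS].
case/connectP: (hc y z HyS HzS) => p0 Hp0 Hl0.
case/shortenP: Hp0 Hl0 => p Hp Hu _ Hl.
apply/connectP; exists p => //; apply: (path_lift (u := u) Hp).
rewrite in_cons negb_or eq_sym Hyu /=; apply/negP => Hup.
move: Hu Hp Hl; case/splitPr: Hup => p1 p2.
case: p2 => [|b p2] Hu Hp Hl.
  by move: Hzu; rewrite Hl last_cat /= eqxx.
move: Hp; rewrite cat_path /= => /and3P [_ /and3P [Hau HaS _] /andP [/and3P [Hub _ HbS] _]].
have Ha := Hleaf _ HaS (etrans (esym _ _) Hau).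
have Hb := Hleaf _ HbS Hub.
move: Hu; rewrite -cat_cons cat_uniq => /and3P [_ /hasP []].
exists b; first by rewrite !in_cons eqxx orbT.
by rewrite Hb -Ha mem_last.
Qed.

Lemma OS_count (V : finType) (e : rel V) :
  symmetric e -> irreflexive e -> ~ has_cycle e ->
  forall n (S : {set V}), #|S| = n.+1 -> connS e S -> OS e S = n.*2.
Proof.
move=> esym eirr acyc; elim=> [|n IH] S hS hc.
  have /cards1P [x ->] : #|S| == 1 by rewrite hS.
  by rewrite /OS !big_set1 eirr.
have h1 : (1 < #|S|)%N by rewrite hS.
have [u [w [HuS HwS Huw Hleaf]]] := leaf_ex esym eirr acyc h1 hc.
have HwS' : w \in S :\ u by rewrite in_setD1 HwS andbT; apply/eqP => Hwu; rewrite Hwu eirr in Huw.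
have hS' : #|S :\ u| = n.+1 by move: hS; rewrite (cardsD1 u) HuS; case.
have := IH _ hS' (connS_del esym hc HuS Hleaf).
rewrite /OS (big_setD1 u HuS) /= => HS2.
have -> : (\sum_(y in S) e u y = 1)%N.
  rewrite (big_setD1 w HwS) Huw big1 // => y; rewrite in_setD1 => /andP [Hyw HyS].
  by case Huy: (e u y) => //; move: Hyw; rewrite (Hleaf _ HyS Huy) eqxx.
rewrite (eq_bigr (fun x => e x u + \sum_(y in S :\ u) e x y)%N); last first.
  by move=> x _; rewrite (big_setD1 u HuS).
rewrite big_split /=.
have -> : (\sum_(x in S :\ u) e x u = 1)%N.
  rewrite (big_setD1 w HwS') esym Huw big1 // => y; rewrite !in_setD1 => /and3P [Hyw _ HyS].
  by case Huy: (e y u) => //; rewrite esym in Huy; move: Hyw; rewrite (Hleaf _ HyS Huy) eqxx.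
rewrite HS2 doubleS; lia.
Qed.

Lemma tree_count (V : finType) (e : rel V) :
  is_tree e -> (0 < #|V|)%N -> (\sum_x \sum_y e x y)%N = (#|V|.-1).*2.
Proof.
case=> [[eirr esym] hc acyc] hV.
have hS : #|[set: V]| = (#|V|.-1).+1 by rewrite cardsT prednK.
rewrite -(OS_count esym eirr acyc hS); last first.
  move=> x y _ _; rewrite (@eq_connect _ _ e) //.
  by move=> a b; rewrite /= !in_setT !andbT.
rewrite /OS; apply: eq_big => [x|x _]; first by rewrite in_setT.
by apply: eq_big => [y|y _] //; rewrite in_setT.
Qed.

Definition Osum (V : finType) (e : rel V) (l : V -> Klein) (a : Klein) : nat :=
  (\sum_x \sum_y (e x y && (l x + l y == a)%R))%N.

Lemma card_sum2 (V : finType) (P : V -> V -> bool) :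
  #|[set p : V * V | P p.1 p.2]| = (\sum_x \sum_y P x y)%N.
Proof.
rewrite -sum1_card big_mkcond /= pair_big /=; apply: eq_bigr => [[x y]] _.
by rewrite in_set /=; case: (P x y).
Qed.

Lemma fE_dbl (V : finType) (e : rel V) (l : V -> Klein) a :
  irreflexive e -> symmetric e -> (fE e l a).*2 = Osum e l a.
Proof.
move=> eirr esym.
rewrite /fE (card_sum2 (fun x y => [&& e x y, (enum_rank x < enum_rank y)%N & (l x + l y == a)%R])).
rewrite -addnn {2}exchange_big /Osum -big_split /=; apply: eq_bigr => x _.
rewrite -big_split /=; apply: eq_bigr => y _.
case Hxy: (e x y); last by rewrite /= esym Hxy.
rewrite esym Hxy /= addrC.
have Hne : enum_rank x != enum_rank y.
  apply/negP => /eqP Hr; move: (enum_rank_inj Hr) => Hxy'.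
  by rewrite Hxy' eirr in Hxy.
case: ltngtP => [_|_|/val_inj Hr]; rewrite /= ?addn0 //.
by rewrite Hr eqxx in Hne.
Qed.

Lemma fV_sum (V : finType) (l : V -> Klein) a :
  fV l a = (\sum_x (l x == a))%N.
Proof.
rewrite /fV -sum1_card big_mkcond /=; apply: eq_bigr => x _.
by rewrite in_set; case: (l x == a).
Qed.

Lemma fV_total (V : finType) (l : V -> Klein) :
  (\sum_a fV l a)%N = #|V|.
Proof.
under eq_bigr do rewrite fV_sum.
rewrite exchange_big /= -sum1_card; apply: eq_bigr => x _.
rewrite (bigD1 (l x)) //= eqxx big1 // => b.
by rewrite eq_sym => /negbTE ->.
Qed.

Lemma Osum_total (V : finType) (e : rel V) (l : V -> Klein) :
  (\sum_a Osum e l a)%N = (\sum_x \sum_y e x y)%N.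
Proof.
rewrite /Osum exchange_big /=; apply: eq_bigr => x _.
rewrite exchange_big /=; apply: eq_bigr => y _.
case: (e x y) => /=; last by rewrite big1.
rewrite (bigD1 (l x + l y)%R) //= eqxx big1 // => b.
by rewrite eq_sym => /negbTE ->.
Qed.

Lemma path_map_ind (V W : finType) (e : rel V) (e' : rel W) (f : V -> W) :
  (forall x y, e' (f x) (f y) = e x y) -> forall v p, path e v p -> path e' (f v) (map f p).
Proof.
move=> hf v p; elim: p v => [//|a p IH] v /= /andP [Hva Hp].
by rewrite hf Hva IH.
Qed.

Lemma attach_cycle (V W : finType) (e : rel V) (e' : rel W) (f : V -> W) :
  connected_graph e -> symmetric e' -> ~ has_cycle e' -> injective f ->
  (forall x y, e' (f x) (f y) = e x y) ->
  forall (x : W) (s : seq W) u v, uniq (x :: s) -> path e' x s ->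
  (forall w, w \in x :: s -> forall t, f t != w) ->
  e' x (f u) -> e' (last x s) (f v) -> (s != [::]) || (u != v) -> False.
Proof.
move=> hc esym acyc finj hf x s u v Hu Hp hN Hxu Hyv Hne.
case/connectP: (hc v u) => p0 Hp0 Hl0.
case/shortenP: Hp0 Hl0 => p Hpp Hup _ Hl.
apply: acyc; exists (x :: s ++ f v :: map f p); split.
- rewrite /= size_cat /= size_map.
  case: s Hne {Hu Hp hN Hyv} => [|a s] /= Hne; last by lia.
  case: p Hpp Hup Hl => [|b p] //= _ _ Hl.
  by rewrite Hl eqxx in Hne.
- move: Hu; rewrite cons_uniq => /andP [HxS Hus].
  have Hfu : uniq (f v :: map f p) by rewrite -map_cons (map_inj_uniq finj).
  have Hx : x \notin f v :: map f p.
    rewrite in_cons negb_or eq_sym (hN x (mem_head _ _) v) /=.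
    by apply/mapP => [[t _ Ht]]; move: (hN x (mem_head _ _) t); rewrite Ht eqxx.
  have hN' : forall w, w \in s -> forall t, f t != w.
    by move=> w Hw; apply: hN; rewrite in_cons Hw orbT.
  have Hs : ~~ has (mem s) (f v :: map f p).
    apply/hasP => [[w]]; rewrite in_cons => /orP [/eqP Hw|/mapP [t _ Ht]] Hws.
      by move: (hN' w Hws v); rewrite Hw eqxx.
    by move: (hN' w Hws t); rewrite Ht eqxx.
  by rewrite cons_uniq mem_cat negb_or cat_uniq HxS Hx Hus Hs Hfu.
- rewrite /= rcons_cat cat_path Hp /= Hyv /= rcons_path (path_map_ind hf Hpp) /=.
  by rewrite last_map -Hl esym.
Qed.

Lemma reach_attach (W : finType) (e' : rel W) (P : pred W) (Nset : {set W}) :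
  connected_graph e' -> (forall w, (w \in Nset) = ~~ P w) -> (#|Nset| <= 3)%N ->
  forall x w0, ~~ P x -> P w0 ->
  (exists w, P w && e' x w) \/
  (exists y, [/\ ~~ P y, e' x y &
     ((exists w, P w && e' y w) \/ exists z, [/\ ~~ P z, e' y z & exists w, P w && e' z w])]).
Proof.
move=> hc hN h3 x w0 Hx Hw0.
case/connectP: (hc x w0) => p0 Hp0 Hl0.
case/shortenP: Hp0 Hl0 => p Hp Hu _ Hl.
have Hhas : has P p.
  case: p Hp Hu Hl => [|a p] _ _ Hl; first by move: Hw0; rewrite Hl /= (negbTE Hx).
  by apply/hasP; exists (last a p); [exact: mem_last | move: Hw0; rewrite Hl].
set j := find P p.
have Hj : (j < size p)%N by rewrite -has_find.
have Hbf : forall i, (i < j)%N -> P (nth x p i) = false := before_find x (s := p) (a := P).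
have HPj : P (nth x p j) := nth_find x Hhas.
have Hj3 : (j <= 2)%N.
  have : (size (take j.+1 (x :: p)) <= #|Nset|)%N.
    apply: size_le_card; first exact: take_uniq.
    apply/(all_nthP x) => i; rewrite size_takel /=; last exact: ltnW.
    case: i => [|i] Hi /=; first by rewrite hN.
    by rewrite nth_take // hN Hbf.
  rewrite size_takel /=; [lia | exact: ltnW].
clearbody j.
move/pathP: Hp => Hp.
have E : forall i, (i < size p)%N -> e' (nth x (x :: p) i) (nth x p i) := Hp x.
move: Hj3 HPj Hj Hbf; rewrite leq_eqVlt ltnS leq_eqVlt ltnS leqn0 => /or3P [] /eqP -> HPj Hj Hbf.
- right; exists (nth x p 0); split.
  + by rewrite Hbf.
  + by apply: (E 0); lia.
  + right; exists (nth x p 1); split.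
    * by rewrite Hbf.
    * by apply: (E 1); lia.
    * by exists (nth x p 2); rewrite HPj /=; apply: (E 2).
- right; exists (nth x p 0); split.
  + by rewrite Hbf.
  + by apply: (E 0); lia.
  + by left; exists (nth x p 1); rewrite HPj /=; apply: (E 1).
- by left; exists (nth x p 0); rewrite HPj /=; apply: (E 0).
Qed.

Lemma sumn_big (F : nat -> nat) r :
  sumn [seq F i | i <- iota 0 r] = (\sum_(0 <= i < r) F i)%N.
Proof.
rewrite /index_iota subn0; elim: (iota 0 r) => [|x s IH] /=.
  by rewrite big_nil.
by rewrite big_cons IH.
Qed.

Lemma sum_img (V W : finType) (f : V -> W) (H : W -> nat) : injective f ->
  (\sum_(w | w \in f @: [set: V]) H w = \sum_v H (f v))%N.
Proof.
move=> finj; rewrite big_imset; last by move=> x y _ _; apply: finj.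
by apply: eq_bigl => v; rewrite in_setT.
Qed.

Lemma sum_N (W : finType) (A : {set W}) (w0 : W) (H : W -> nat) :
  (\sum_(w | w \notin A) H w = \sum_(0 <= i < #|~: A|) H (nth w0 (enum (~: A)) i))%N.
Proof.
rewrite (eq_bigl (fun w => w \in ~: A)); last by move=> w; rewrite in_setC.
by rewrite -big_enum (big_nth w0) -cardE.
Qed.

Lemma sum_split (V W : finType) (f : V -> W) (w0 : W) (H : W -> nat) : injective f ->
  (\sum_w H w = \sum_v H (f v) +
     \sum_(0 <= i < #|~: (f @: [set: V])|) H (nth w0 (enum (~: (f @: [set: V]))) i))%N.
Proof.
move=> finj; rewrite (bigID (fun w => w \in f @: [set: V])) /=.
by rewrite -(sum_img H finj) -(sum_N _ w0).
Qed.

Lemma K_cases (P : Klein -> Prop) :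
  P (phi (false,false)) -> P (phi (false,true)) -> P (phi (true,false)) -> P (phi (true,true)) ->
  forall a, P a.
Proof. by move=> H1 H2 H3 H4 a; rewrite -(psiK a); case: (psi a) => [[] []]. Qed.

Lemma adj_eq (W : finType) (e' : rel W) (h : nat -> W) r :
  irreflexive e' -> symmetric e' -> (r <= 3)%N -> forall i j, (i < r)%N -> (j < r)%N ->
  adjf ((1 < r) && e' (h 0) (h 1)) ((2 < r) && e' (h 0) (h 2)) ((2 < r) && e' (h 1) (h 2)) i j
  = e' (h i) (h j).
Proof.
move=> eirr esym hr i j Hi Hj.
have Ti : (i < 3)%N by lia.
have Tj : (j < 3)%N by lia.
case: i Hi Ti => [|[|[|i]]] Hi Ti //; case: j Hj Tj => [|[|[|j]]] Hj Tj //=;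
  rewrite ?eirr ?Hi ?Hj //= esym //.
Qed.

Lemma att_eq (o : nat -> option K2) r : (r <= 3)%N -> forall i, (i < r)%N ->
  attf (if (0 < r)%N then o 0 else None) (if (1 < r)%N then o 1 else None)
       (if (2 < r)%N then o 2 else None) i = o i.
Proof.
move=> hr i Hi; have Ti : (i < 3)%N by lia.
by case: i Hi Ti => [|[|[|i]]] Hi Ti //=; rewrite Hi.
Qed.

Unset Implicit Arguments.

Theorem lemma4p3 (V W : finType) (e : rel V) (e' : rel W) (k : nat) :
  is_tree e -> cordial Klein e -> #|V| = (4 * k)%N ->
  is_tree e' -> induced_subgraph e e' -> (#|W| <= 4 * k + 3)%N ->
  cordial Klein e'.
Proof.
move=> hT [l hl] hV hT' [f [finj hf]] hW.
have hT0 := hT.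
case: hT => [[eirr esym] hc acyc].
case: hT' => [[eirr' esym'] hc' acyc'].
case: (pickP (fun _ : W => true)) => [w0 _|hW0]; last first.
  have W0 : forall w : W, False by move=> w; move: (hW0 w).
  have c0 : forall (T : finType) (A : {set T}), (forall t : T, False) -> #|A| = 0%N.
    by move=> T A H; apply: eq_card0 => t; case: (H t).
  exists (fun _ => 0%R) => a1 a2; rewrite /fV /fE !c0 //; by case=> x _; apply: (W0 x).
have hl1 : forall a1 a2, (fV l a1 <= (fV l a2).+1)%N by move=> a1 a2; case: (hl a1 a2).
have hl2 : forall a1 a2, (fE e l a1 <= (fE e l a2).+1)%N by move=> a1 a2; case: (hl a1 a2).
have hfV : forall a, fV l a = k.
  have ht := fV_total l; rewrite sumK hV in ht.
  have := hl1 (phi (false,false)) (phi (false,true)).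
  have := hl1 (phi (false,false)) (phi (true,false)).
  have := hl1 (phi (false,false)) (phi (true,true)).
  have := hl1 (phi (false,true)) (phi (false,false)).
  have := hl1 (phi (false,true)) (phi (true,false)).
  have := hl1 (phi (false,true)) (phi (true,true)).
  have := hl1 (phi (true,false)) (phi (false,false)).
  have := hl1 (phi (true,false)) (phi (false,true)).
  have := hl1 (phi (true,false)) (phi (true,true)).
  have := hl1 (phi (true,true)) (phi (false,false)).
  have := hl1 (phi (true,true)) (phi (false,true)).
  have := hl1 (phi (true,true)) (phi (true,false)).
  do 12 move=> ?; move=> a; rewrite -(psiK a); case: (psi a) => [[] []]; lia.
have [q [dopt [hq hdopt]]] : exists q dopt, (forall a, fE e l a = q + dlf dopt (psi a))%N /\
   (if dopt is Some _ then (0 < #|V|)%N else #|V| = 0%N).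
  case: k hV hW hfV => [|k] hV hW hfV.
    exists 0%N, None; split => // a; apply: eq_card0 => [[x y]].
    have : (0 < #|V|)%N by apply/card_gt0P; exists x.
    by move=> H; exfalso; move: H; rewrite hV.
  have hV0 : (0 < #|V|)%N by rewrite hV.
  have E1 := Osum_total e l; rewrite (tree_count hT0 hV0) hV sumK -!fE_dbl // in E1.
  have := hl2 (phi (false,false)) (phi (false,true)).
  have := hl2 (phi (false,false)) (phi (true,false)).
  have := hl2 (phi (false,false)) (phi (true,true)).
  have := hl2 (phi (false,true)) (phi (false,false)).
  have := hl2 (phi (false,true)) (phi (true,false)).
  have := hl2 (phi (false,true)) (phi (true,true)).
  have := hl2 (phi (true,false)) (phi (false,false)).
  have := hl2 (phi (true,false)) (phi (false,true)).
  have := hl2 (phi (true,false)) (phi (true,true)).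
  have := hl2 (phi (true,true)) (phi (false,false)).
  have := hl2 (phi (true,true)) (phi (false,true)).
  have := hl2 (phi (true,true)) (phi (true,false)).
  move=> *.
  have : [\/ [/\ fE e l (phi (false,false)) = k, fE e l (phi (false,true)) = k.+1,
                fE e l (phi (true,false)) = k.+1 & fE e l (phi (true,true)) = k.+1],
             [/\ fE e l (phi (false,false)) = k.+1, fE e l (phi (false,true)) = k,
                fE e l (phi (true,false)) = k.+1 & fE e l (phi (true,true)) = k.+1],
             [/\ fE e l (phi (false,false)) = k.+1, fE e l (phi (false,true)) = k.+1,
                fE e l (phi (true,false)) = k & fE e l (phi (true,true)) = k.+1] |
             [/\ fE e l (phi (false,false)) = k.+1, fE e l (phi (false,true)) = k.+1,
                fE e l (phi (true,false)) = k.+1 & fE e l (phi (true,true)) = k]].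
    move: E1; rewrite -!muln2 => E1.
    have H : forall x0 x1 x2 x3 : nat, (x0 * 2 + x1 * 2 + x2 * 2 + x3 * 2 = (4 * k.+1).-1 * 2)%N ->
      (x0 <= x1.+1)%N -> (x0 <= x2.+1)%N -> (x0 <= x3.+1)%N -> (x1 <= x0.+1)%N -> (x1 <= x2.+1)%N ->
      (x1 <= x3.+1)%N -> (x2 <= x0.+1)%N -> (x2 <= x1.+1)%N -> (x2 <= x3.+1)%N ->
      (x3 <= x0.+1)%N -> (x3 <= x1.+1)%N -> (x3 <= x2.+1)%N ->
      [\/ [/\ x0 = k, x1 = k.+1, x2 = k.+1 & x3 = k.+1], [/\ x0 = k.+1, x1 = k, x2 = k.+1 & x3 = k.+1],
          [/\ x0 = k.+1, x1 = k.+1, x2 = k & x3 = k.+1] | [/\ x0 = k.+1, x1 = k.+1, x2 = k.+1 & x3 = k]].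
      move=> x0 x1 x2 x3 *.
      have [H0|H0] : x0 = k \/ x0 = k.+1 by lia.
        by constructor 1; split; lia.
      have [H1|H1] : x1 = k \/ x1 = k.+1 by lia.
        by constructor 2; split; lia.
      have [H2|H2] : x2 = k \/ x2 = k.+1 by lia.
        by constructor 3; split; lia.
      by constructor 4; split; lia.
    by apply: H => //; apply: hl2.
  case=> [[H0 H1 H2 H3]|[H0 H1 H2 H3]|[H0 H1 H2 H3]|[H0 H1 H2 H3]].
  - exists k, (Some (false,false)); split => // a; rewrite -(psiK a) phiK; case: (psi a) => [[] []]; rewrite /= ?H0 ?H1 ?H2 ?H3; lia.
  - exists k, (Some (false,true)); split => // a; rewrite -(psiK a) phiK; case: (psi a) => [[] []]; rewrite /= ?H0 ?H1 ?H2 ?H3; lia.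
  - exists k, (Some (true,false)); split => // a; rewrite -(psiK a) phiK; case: (psi a) => [[] []]; rewrite /= ?H0 ?H1 ?H2 ?H3; lia.
  - exists k, (Some (true,true)); split => // a; rewrite -(psiK a) phiK; case: (psi a) => [[] []]; rewrite /= ?H0 ?H1 ?H2 ?H3; lia.
pose img := f @: [set: V].
pose Ns := ~: img.
have cimg : #|img| = #|V| by rewrite /img card_imset // cardsT.
have hNsW : (#|img| + #|Ns| = #|W|)%N by rewrite cardsC.
pose r := #|Ns|.
have hr3 : (r <= 3)%N by rewrite /r; lia.
pose s := enum Ns.
pose h i := nth w0 s i.
have hs : size s = r by rewrite /s /r cardE.
have huniq : uniq s := enum_uniq _.
have himg : forall v, f v \in img by move=> v; apply: imset_f.
have hNimg : forall w, (w \in Ns) = (w \notin img) by move=> w; rewrite in_setC.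
have hnot : forall w, w \notin img -> forall t, f t != w.
  by move=> w Hw t; apply/eqP => Ht; rewrite -Ht himg in Hw.
have hhN : forall i, (i < r)%N -> h i \in Ns.
  by move=> i Hi; rewrite -(mem_enum (mem Ns)); apply: mem_nth; rewrite hs.
have hhimg : forall i, (i < r)%N -> h i \notin img by move=> i Hi; rewrite -hNimg hhN.
have hindex : forall w, w \in Ns -> (index w s < r)%N /\ h (index w s) = w.
  move=> w Hw; have Hws : w \in s by rewrite mem_enum.
  by split; [rewrite -hs index_mem | rewrite /h nth_index].
pose attW (w : W) := omap l [pick v | e' w (f v)].
have att_uniq : forall x, x \notin img -> forall u v, e' x (f u) -> e' x (f v) -> u = v.
  move=> x Hx u v Hu Hv; case: (u =P v) => // /eqP Huv; exfalso.
  have hN1 : forall w, w \in [:: x] -> forall t, f t != w.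
    by move=> w; rewrite inE => /eqP ->; apply: (hnot _ Hx).
  exact: (attach_cycle hc esym' acyc' finj hf (s := [::]) (u := u) (v := v) (erefl _) (erefl _) hN1 Hu Hv Huv).
have isSome_att : forall w, (exists w', (w' \in img) && e' w w') -> isSome (omap psi (attW w)).
  move=> w. case=> w1. case/andP=> Hw1 Hv1. case/imsetP: Hw1 => t _ Ht; rewrite Ht in Hv1; rewrite /attW.
  by case: pickP => [//|/(_ t)]; rewrite /= Hv1.
pose o (i : nat) := omap psi (attW (h i)).
pose b01 := (1 < r)%N && e' (h 0) (h 1).
pose b02 := (2 < r)%N && e' (h 0) (h 2).
pose b12 := (2 < r)%N && e' (h 1) (h 2).
pose o0 := if (0 < r)%N then o 0 else None.
pose o1 := if (1 < r)%N then o 1 else None.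
pose o2 := if (2 < r)%N then o 2 else None.
have hadj : forall i j, (i < r)%N -> (j < r)%N -> adjf b01 b02 b12 i j = e' (h i) (h j).
  exact: adj_eq.
have hatt : forall i, (i < r)%N -> attf o0 o1 o2 i = o i.
  exact: att_eq.
have hcons : consf r (adjf b01 b02 b12) (attf o0 o1 o2) dopt.
  case: dopt hq hdopt => [c|] hq hdopt; last first.
    apply/allP => i; rewrite mem_iota add0n => /andP [_ Hi].
    rewrite hatt // /o /attW; case: pickP => // v _; exfalso.
    have : (0 < #|V|)%N by apply/card_gt0P; exists v.
    by rewrite hdopt.
  have [v0 _] : exists v0 : V, v0 \in V by apply/card_gt0P.
  rewrite /consf; apply/andP; split.
  - apply/allP => i; rewrite mem_iota add0n => /andP [_ Hi].
    apply/allP => j; rewrite mem_iota add0n => /andP [_ Hj].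
    apply/implyP; rewrite hadj // !hatt // /o /attW => Hij.
    case: pickP => [u Hu|] /=; last by [].
    case: pickP => [v Hv|] //=; exfalso.
    have Hne : h i != h j by apply/eqP => Heq; rewrite Heq eirr' in Hij.
    have hN2 : forall w, w \in [:: h i; h j] -> forall t, f t != w.
      move=> w; rewrite !inE => /orP [/eqP ->|/eqP ->]; apply: hnot; exact: hhimg.
    apply: (attach_cycle hc esym' acyc' finj hf (x := h i) (s := [:: h j]) (u := u) (v := v) _ _ hN2 Hu Hv).
    + by rewrite /= inE Hne.
    + by rewrite /= Hij.
    + done.
  - apply/allP => i; rewrite mem_iota add0n => /andP [_ Hi].
    have := reach_attach (P := fun w => w \in img) hc' hNimg hr3 (hhimg i Hi) (himg v0).
    case=> [Hatt | [y [Hy Hxy Hrest]]].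
      by rewrite hatt // isSome_att.
    apply/orP; right; apply/hasP.
    have [Hyr Hyh] : (index y s < r)%N /\ h (index y s) = y by apply: hindex; rewrite hNimg.
    exists (index y s); first by rewrite mem_iota add0n Hyr.
    rewrite hadj // Hyh Hxy /=.
    case: Hrest => [Hatt' | [z [Hz Hyz Hzatt]]].
      by rewrite hatt // /o Hyh isSome_att.
    apply/orP; right; apply/hasP.
    have [Hzr Hzh] : (index z s < r)%N /\ h (index z s) = z by apply: hindex; rewrite hNimg.
    exists (index z s); first by rewrite mem_iota add0n Hzr.
    by rewrite hadj // Hyh Hzh Hyz hatt // /o Hzh isSome_att.
have m01 : ((1 < r) || ~~ b01)%N by rewrite /b01; case: (1 < r)%N.
have m02 : ((2 < r) || ~~ b02)%N by rewrite /b02; case: (2 < r)%N.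
have m12 : ((2 < r) || ~~ b12)%N by rewrite /b12; case: (2 < r)%N.
have n0 : ((0 < r) || (o0 == None))%N by rewrite /o0; case: (0 < r)%N.
have n1 : ((1 < r) || (o1 == None))%N by rewrite /o1; case: (1 < r)%N.
have n2 : ((2 < r) || (o2 == None))%N by rewrite /o2; case: (2 < r)%N.
have [g0 [g1 [g2 Hgood]]] := fin_sound hr3 m01 m02 m12 n0 n1 n2 hcons.
pose gF := gf g0 g1 g2.
pose L (w : W) : Klein := if [pick v | f v == w] is Some v then l v else phi (gF (index w s)).
have Lf : forall v, L (f v) = l v.
  move=> v; rewrite /L; case: pickP => [u /eqP /finj -> //|/(_ v)]; by rewrite eqxx.
have Lh : forall i, (i < r)%N -> L (h i) = phi (gF i).
  move=> i Hi; rewrite /L; case: pickP => [u /eqP Hu|_].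
    by move: (hhimg i Hi); rewrite -Hu himg.
  by rewrite /h index_uniq // hs.
have Hsplit : forall H : W -> nat, (\sum_w H w = \sum_v H (f v) + \sum_(0 <= i < r) H (h i))%N.
  by move=> H; exact: (sum_split w0 H finj).
move: Hgood; rewrite /good => /andP [/allP Hcv /allP Hbal].
exists L => a1 a2; split.
- have HV : forall a, fV L a = (k + cvf r gF (psi a))%N.
    move=> a; rewrite fV_sum Hsplit /cvf sumn_big.
    rewrite -(hfV a) fV_sum; congr (_ + _).
      by apply: eq_bigr => v _; rewrite Lf.
    by apply: eq_big_nat => i /andP [_ Hi]; rewrite Lh // eq_psi phiK.
  rewrite !HV /gF; have := Hcv _ (mem_kl2 (psi a1)); lia.
- have HE : forall a, (fE e' L a).*2 = ((q + dlf dopt (psi a)).*2 +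
      Mf r (adjf b01 b02 b12) (attf o0 o1 o2) gF (psi a))%N.
    move=> a; rewrite fE_dbl // -hq fE_dbl //.
    have A1 : (\sum_v \sum_v2 (e' (f v) (f v2) && (L (f v) + L (f v2) == a)%R))%N = Osum e l a.
      by apply: eq_bigr => v _; apply: eq_bigr => v2 _; rewrite hf !Lf.
    have A2 : (\sum_v \sum_(0 <= j < r) (e' (f v) (h j) && (L (f v) + L (h j) == a)%R))%N =
              (\sum_(0 <= i < r) \sum_v (e' (h i) (f v) && (L (h i) + L (f v) == a)%R))%N.
      rewrite exchange_big; apply: eq_bigr => j _; apply: eq_bigr => v _.
      by rewrite esym' addrC.
    have A3 : (\sum_(0 <= i < r) \sum_v (e' (h i) (f v) && (L (h i) + L (f v) == a)%R))%N =
              (\sum_(0 <= i < r) attlab (attf o0 o1 o2 i) (gF i) (psi a))%N.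
      apply: eq_big_nat => i /andP [_ Hi]; rewrite hatt // /o /attW.
      case: pickP => [u Hu|Hn] /=.
        rewrite (bigD1 u) //= Hu /= big1 ?addn0.
          by rewrite Lh // Lf addrC eq_psi psiD phiK.
        move=> v Hvu; case Hv: (e' (h i) (f v)) => //=.
        by move: Hvu; rewrite (att_uniq _ (hhimg i Hi) _ _ Hv Hu) eqxx.
      by rewrite big1 // => v _; rewrite Hn.
    have A4 : (\sum_(0 <= i < r) \sum_(0 <= j < r) (e' (h i) (h j) && (L (h i) + L (h j) == a)%R))%N =
              (\sum_(0 <= i < r) \sum_(0 <= j < r) (adjf b01 b02 b12 i j && (kadd (gF i) (gF j) == psi a)))%N.
      apply: eq_big_nat => i /andP [_ Hi]; apply: eq_big_nat => j /andP [_ Hj].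
      by rewrite hadj // !Lh // eq_psi psiD !phiK.
    rewrite /Mf sumn_big.
    under eq_bigr => i _ do rewrite sumn_big mul2n -addnn.
    rewrite !big_split /=.
    rewrite {1}/Osum Hsplit.
    under eq_bigr => v _ do rewrite Hsplit.
    under eq_big_nat => i _ do rewrite Hsplit.
    rewrite !big_split /= A1 A2 A3 A4; lia.
  pose F := (fun a => 2 * dlf dopt a + Mf r (adjf b01 b02 b12) (attf o0 o1 o2) gF a)%N.
  have := Hbal _ (map_f F (mem_kl2 (psi a1))).
  move=> /allP /(_ _ (map_f F (mem_kl2 (psi a2)))); rewrite /F.
  have := HE a1; have := HE a2; rewrite /gF -!muln2; lia.
Qed.
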